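(* Let $t_0>0$ and let $\{\sigma_t\}_{0<t<t_0}$ be a family of positive semidefinite $2\times 2$ complex matrices, written in a fixed orthonormal basis $\{\ket0,\ket1\}$ of $\mathbb C^2$ as $$\sigma_t=\begin{pmatrix} a_t & b_t\\ \bar b_t & d_t\end{pmatrix},$$ with $\operatorname{tr}\sigma_t>0$ and such that the normalized states $\sigma_t/\operatorname{tr}\sigma_t$ converge to the pure state $\ket0\bra0$ as $t\to0$. Suppose there exist constants $l>0$ and $c<\infty$ such that $|b_t|\ge l t$ and $d_t\le c t^2$ for all sufficiently small $t>0$. Then there is no representation $$\sigma_t=\int_\Lambda f_t(\lambda)\,\tau_\lambda\,d\mu(\lambda)\qquad\text{for all } 0<t<t_0,$$ where $\mu$ is a finite (positive) measure on a measurable space $\Lambda$ not depending on $t$, $\lambda\mapsto\tau_\lambda$ is a measurable map into the set of $2\times2$ density matrices (qubit states), and, for each $t$, $f_t:\Lambda\to[0,1]$ is measurable. In particular, any projective assemblage containing such a family of unnormalized conditional states admits no local hidden state model with a finite hidden-state measure.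
   Context: A local hidden state (LHS) model for an assemblage of unnormalized conditional states $\sigma_{a|M}$ on a trusted qubit is a representation $\sigma_{a|M}=\int_\Lambda p(a|M,\lambda)\tau_\lambda\,d\mu(\lambda)$ with $\mu$ a finite measure (e.g. a probability measure), $\tau_\lambda$ density matrices, and response functions $p(a|M,\lambda)\in[0,1]$ summing to one over outcomes $a$. *)

(* Defs.v *)
From HB Require Import structures.
From mathcomp Require Import all_boot all_order all_algebra.
From mathcomp Require Import complex.
From mathcomp Require Import all_classical all_reals all_analysis.
Set Implicit Arguments. Unset Strict Implicit. Unset Printing Implicit Defensive.
Import Order.TTheory GRing.Theory Num.Theory.
Import numFieldNormedType.Exports.
Local Open Scope ring_scope.

Definition adjmx (R : rcfType) (m n : nat) (A : 'M[R[i]]_(m, n)) : 'M[R[i]]_(n, m) :=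
  \matrix_(i < n, j < m) (A j i)^*.

Definition psd (R : rcfType) (A : 'M[R[i]]_2) : Prop :=
  adjmx A = A /\ forall v : 'cV[R[i]]_2, 0 <= (adjmx v *m A *m v) 0 0.

Definition density (R : rcfType) (A : 'M[R[i]]_2) : Prop :=
  psd A /\ \tr A = 1.

Definition ket0bra0 (R : rcfType) : 'M[R[i]]_2 :=
  \matrix_(i < 2, j < 2) (if (i == 0) && (j == 0) then 1 else 0).

(* Main.v *)
Require Import Defs.
From HB Require Import structures.
From mathcomp Require Import all_boot all_order all_algebra.
From mathcomp Require Import complex.
From mathcomp Require Import all_classical all_reals all_analysis.
From mathcomp Require Import ring lra measurable_realfun.
Import Order.TTheory GRing.Theory Num.Theory.
Import numFieldNormedType.Exports.
Local Open Scope ring_scope.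
Local Open Scope classical_set_scope.

Lemma sum2 (V : nmodType) (F : 'I_2 -> V) : (\sum_(i < 2) F i = F 0 + F 1)%R.
Proof. by rewrite !big_ord_recl big_ord0 addr0; congr (F _ + F _); apply/val_inj. Qed.

Lemma dens_bound (R : rcfType) (A : 'M[R[i]]_2) : density A ->
  0 <= complex.Re (A 1 1) /\
  complex.Re (A 0 1) ^+ 2 + complex.Im (A 0 1) ^+ 2 <= complex.Re (A 1 1).
Proof.
move=> [[hA hq] htr].
have h10 : A 1 0 = (A 0 1)^*.
  by rewrite -[in LHS]hA mxE.
have h11 : (A 1 1)^* = A 1 1 by rewrite -[in RHS]hA mxE.
have h00 : (A 0 0)^* = A 0 0 by rewrite -[in RHS]hA mxE.
move: htr; rewrite /mxtrace sum2 => htr.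
have q1 := hq (\col_i (if i == 0 then 0 else 1)).
have q2 := hq (\col_i (if i == 0 then - A 0 1 else 1)).
move: q1 q2; rewrite !mxE !sum2 !mxE !sum2 !mxE /= h10.
move: h11 h00 htr.
case: (A 0 0) => a0 a1; case: (A 0 1) => b0 b1; case: (A 1 1) => d0 d1.
move=> h11 h00 htr.
rewrite !lecE /=; simpc. move=> /andP[_ q1] /andP[_ q2]. move: htr => [ht1 _]. split; first by lra. case: h00 => ha1. have a10 : a1 = 0 by lra. subst a1. have a0e : a0 = 1 - d0 by lra. subst a0. rewrite !expr2. nra.
Qed.
Lemma norm_ge (R : rcfType) (x : R) (z : R[i]) : 0 <= x -> (x%:C)%C <= `|z| ->
  x <= `|complex.Re z| + `|complex.Im z|.
Proof.
move=> x0; have := sqr_normc z; have := normr_ge0 z.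
case: `|z| => p q; case: z => a b /=.
rewrite !lecE /= => /andP[/eqP q0 p0]; subst q.
rewrite expr2 /=; simpc => -[e1 _] /andP[_ hx].
have : x ^+ 2 <= a ^+ 2 + b ^+ 2 by rewrite -e1 expr2; nra.
move=> h; have ha := real_normK (num_real a); have hb := real_normK (num_real b).
have := normr_ge0 a; have := normr_ge0 b. rewrite !expr2 in h ha hb. nra.
Qed.

Lemma le_realC (R : rcfType) (y : R) (z : R[i]) : z <= (y%:C)%C -> complex.Re z <= y.
Proof. by case: z => a b; rewrite lecE /= => /andP[]. Qed.
Lemma int_bound d (L : measurableType d) (R : realType)
  (mu : {measure set L -> \bar R}) (g h y : L -> R) (A : set L) (eps eta : R) :
  0 < eps -> 0 < eta -> measurable A ->
  (forall x, A x <-> 0 < y x <= eta ^+ 2) ->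
  measurable_fun setT g -> measurable_fun setT h -> measurable_fun setT y ->
  (forall x, 0 <= g x <= 1) -> (forall x, 0 <= y x /\ h x ^+ 2 <= y x) ->
  (`| \int[mu]_x (g x * h x)%:E | <=
     (eps / 2)%:E * mu A + (1 / (2 * eps) + 1 / eta)%:E * \int[mu]_x (g x * y x)%:E)%E.
Proof.
move=> e0 eta0 mA hA mg mh my hg hy.
set C := 1 / (2 * eps) + 1 / eta.
have C0 : 0 <= C by rewrite /C; apply: addr_ge0; apply: divr_ge0 => //; lra.
have mgh : measurable_fun setT (fun x => g x * h x) by exact: measurable_funM.
have mgy : measurable_fun setT (fun x => g x * y x) by exact: measurable_funM.
apply: (le_trans (le_abse_integral mu measurableT _)).
  exact/measurable_EFinP.
have pt : forall x, `|g x * h x| <= eps / 2 * \1_A x + C * (g x * y x).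
  move=> x; rewrite indicE; have g01 := hg x; have [y0 hy2] := hy x.
  have Hh := real_normK (num_real (h x)).
  have hn := normr_ge0 (h x).
  rewrite normrM (ger0_norm (proj1 (andP g01))).
  case: (boolP (x \in A)) => xA.
    move: xA; rewrite inE => /hA /andP[yp ye]; rewrite mulr1.
    (* |h| <= eps/2 + h^2/(2 eps) *)
    have : `|h x| <= eps / 2 + y x / (2 * eps).
      have -> : eps / 2 + y x / (2 * eps) = (eps ^+ 2 + y x) / (2 * eps).
        by field; lra.
      rewrite ler_pdivlMr; last lra.
      have := sqr_ge0 (`|h x| - eps); rewrite !expr2 in Hh hy2 *; nra.
    move=> hb.
    have : y x / (2 * eps) <= y x * C.
      rewrite /C mulrDr; have : 0 <= y x * (1 / eta) by apply: mulr_ge0 => //; rewrite divr_ge0 //; lra.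
      by rewrite mulrA mulr1; lra.
    move: g01 => /andP[g0 g1].
    rewrite mulrCA.
    have : 0 <= y x * C by apply: mulr_ge0.
    nra.
  rewrite mulr0 add0r.
  move: xA; rewrite notin_setE => xA.
  have [y00|ypos] := eqVneq (y x) 0.
    have : h x ^+ 2 = 0 by apply/eqP; rewrite eq_le sqr_ge0 andbT -y00.
    move/eqP; rewrite sqrf_eq0 => /eqP ->; rewrite normr0 mulr0.
    by apply: mulr_ge0 => //; apply: mulr_ge0 => //; case/andP: g01.
  have yp : 0 < y x by rewrite lt_neqAle eq_sym ypos.
  have ygt : eta ^+ 2 < y x.
    rewrite ltNge; apply/negP => ye; apply: xA; by apply/hA; rewrite yp ye.
  have : `|h x| * eta <= y x.
    rewrite !expr2 in Hh hy2 ygt; nra.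
  move=> hb.
  have : y x / eta <= C * y x.
    rewrite /C mulrDl; have : 0 <= 1 / (2 * eps) * y x by apply: mulr_ge0 => //; apply: divr_ge0; lra.
    rewrite mul1r mulrC; lra.
  have : `|h x| <= y x / eta by rewrite ler_pdivlMr.
  move: g01 => /andP[g0 g1].
  rewrite mulrCA. nra.
apply: (@le_trans _ _ (\int[mu]_x ((eps / 2 * \1_A x)%:E + (C * (g x * y x))%:E))%E).
  apply: ge0_le_integral => //.
  - apply: measurableT_comp => //; exact/measurable_EFinP.
  - apply/measurable_EFinP; apply: measurable_funD.
      by apply: measurable_funM => //; exact: measurable_indic.
    by apply: measurable_funM => //.
  - by move=> x _; rewrite abse_EFin -EFinD lee_fin; exact: pt.
rewrite ge0_integralD //.
- under eq_integral do rewrite EFinM.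
  rewrite ge0_integralZl_EFin //; last 2 first.
  + by apply/measurable_EFinP; exact: measurable_indic.
  + lra.
  rewrite integral_indic // setIT.
  under [X in (_ + X <= _)%E]eq_integral do rewrite EFinM.
  rewrite ge0_integralZl_EFin //.
  + by move=> x _; rewrite lee_fin; apply: mulr_ge0; [case/andP: (hg x)|case: (hy x)].
  + exact/measurable_EFinP.
- move=> x _; rewrite lee_fin; apply: mulr_ge0; [lra|by rewrite indicE].
- by apply/measurable_EFinP; apply: measurable_funM => //; exact: measurable_indic.
- by move=> x _; rewrite lee_fin; apply: mulr_ge0 => //; apply: mulr_ge0; [case/andP: (hg x)|case: (hy x)].
- by apply/measurable_EFinP; apply: measurable_funM.
Qed.

Theorem mainTheorem1 (R : realType) (t0 : R) (ht0 : 0 < t0)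
  (sigma : R -> 'M[R[i]]_2)
  (hpsd : forall t, 0 < t < t0 -> psd (sigma t))
  (htr : forall t, 0 < t < t0 -> 0 < \tr (sigma t))
  (hconv : forall i j : 'I_2,
     (fun t => complex.Re ((\tr (sigma t))^-1 * sigma t i j)) @ 0^'+
       --> complex.Re (ket0bra0 R i j) /\
     (fun t => complex.Im ((\tr (sigma t))^-1 * sigma t i j)) @ 0^'+
       --> complex.Im (ket0bra0 R i j))
  (l c : R) (hl : 0 < l)
  (hb : \forall t \near 0^'+, (l * t)%:C%C <= `| sigma t 0 1 |)
  (hd : \forall t \near 0^'+, sigma t 1 1 <= (c * t ^+ 2)%:C%C) :
  forall (d : measure_display) (L : measurableType d)
    (mu : {measure set L -> \bar R}) (tau : L -> 'M[R[i]]_2)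
    (f : R -> L -> R),
  (mu setT < +oo)%E ->
  (forall x, density (tau x)) ->
  (forall i j : 'I_2, measurable_fun setT (fun x => complex.Re (tau x i j)) /\
                      measurable_fun setT (fun x => complex.Im (tau x i j))) ->
  (forall t, 0 < t < t0 -> measurable_fun setT (f t) /\
                           forall x, 0 <= f t x <= 1) ->
  ~ (forall t, 0 < t < t0 -> forall i j : 'I_2,
       (complex.Re (sigma t i j))%:E =
         (\int[mu]_x (f t x * complex.Re (tau x i j))%:E)%E /\
       (complex.Im (sigma t i j))%:E =
         (\int[mu]_x (f t x * complex.Im (tau x i j))%:E)%E).
Proof.
move=> d L mu tau f mufin hdens hmeas hf hrep.
pose y x := complex.Re (tau x 1 1).
pose r x := complex.Re (tau x 0 1).
pose s x := complex.Im (tau x 0 1).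
have hyr x : 0 <= y x /\ r x ^+ 2 <= y x.
  have [h1 h2] := @dens_bound _ _ (hdens x); split => //.
  by apply: le_trans h2; rewrite /r lerDl sqr_ge0.
have hys x : 0 <= y x /\ s x ^+ 2 <= y x.
  have [h1 h2] := @dens_bound _ _ (hdens x); split => //.
  by apply: le_trans h2; rewrite /s lerDr sqr_ge0.
have my : measurable_fun setT y := (hmeas 1 1).1.
have mr : measurable_fun setT r := (hmeas 0 1).1.
have ms : measurable_fun setT s := (hmeas 0 1).2.
pose a := `|c| + 1.
have a0 : 0 < a by rewrite /a; have := normr_ge0 c; lra.
have ca : c <= a by rewrite /a; have := ler_norm c; lra.
pose K := 4 * a / l.
have K0 : 0 < K by rewrite /K; apply: divr_gt0 => //; lra.
pose F n := y @^-1` `]0, (n.+1%:R^-1) ^+ 2].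
have mF n : measurable (F n).
  by rewrite -[F n]setTI; apply: my => //; exact: measurable_itv.
have F0fin : (mu (F 0%N) < +oo)%E.
  by apply: le_lt_trans mufin; apply: le_measure => //; rewrite inE.
have capF : \bigcap_n F n = set0.
  rewrite -subset0 => x hx.
  have := hx 0%N I; rewrite /F /= in_itv /= => /andP[yp _].
  have [k hk] := ltr_add_invr yp; rewrite add0r in hk.
  have := hx k I; rewrite /F /= in_itv /= => /andP[_ hk2].
  have i0 : 0 < k.+1%:R^-1 :> R by rewrite invr_gt0 ltr0Sn.
  have i1 : k.+1%:R^-1 <= 1 :> R by rewrite invf_le1 ?ltr0Sn // ler1n.
  move: hk2; rewrite expr2 => hk2.
  have h3 : 0 <= k.+1%:R^-1 * (1 - k.+1%:R^-1) :> R by apply: mulr_ge0; [exact: ltW | by rewrite subr_ge0].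
  rewrite mulrBr mulr1 subr_ge0 in h3. move: i0 i1 hk hk2 h3; move: (k.+1%:R^-1 : R) => b; lra.
have niF : nonincreasing_seq F.
  move=> m n mn; rewrite subsetEset => x; rewrite /F /= !in_itv /= => /andP[-> h].
  rewrite (le_trans h) //.
  have i0 : 0 < n.+1%:R^-1 :> R by rewrite invr_gt0 ltr0Sn.
  have imn : n.+1%:R^-1 <= m.+1%:R^-1 :> R.
    by rewrite lef_pV2 ?posrE ?ltr0Sn // ler_nat.
  rewrite !expr2; move: i0 imn; move: (n.+1%:R^-1 : R) (m.+1%:R^-1 : R) => u v; nra.
have cvF := nonincreasing_cvg_mu F0fin mF _ niF.
rewrite capF measure0 in cvF.
have {cvF} [_ cvF] := (fine_cvgP _ _).1 (cvF measurable0).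
pose e := l / (4 * K).
have e0 : 0 < e by rewrite /e divr_gt0 //; lra.
have [n hn] := filter_ex (cvgr_lt _ cvF _ e0).
pose eta : R := n.+1%:R^-1.
have eta0 : 0 < eta by rewrite invr_gt0 ltr0Sn.
have mfin : mu (F n) \is a fin_num.
  rewrite ge0_fin_numE ?measure_ge0 //; apply: le_lt_trans mufin.
  by apply: le_measure => //; rewrite inE.
pose m := fine (mu (F n)).
have muF : mu (F n) = m%:E by rewrite /m fineK.
have mlt : m < e by exact: hn.
have m0 : 0 <= m by rewrite /m fine_ge0 ?measure_ge0.
pose bnd := eta * l / (8 * a).
have bnd0 : 0 < bnd by rewrite /bnd divr_gt0 ?mulr_gt0 //; lra.
have : \forall t \near 0^'+, [/\ 0 < t, t < t0, (l * t)%:C%C <= `| sigma t 0 1 |,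
   sigma t 1 1 <= (c * t ^+ 2)%:C%C & t < bnd].
  near=> t; split.
  - by near: t; exact: nbhs_right_gt.
  - by near: t; exact: nbhs_right_lt.
  - by near: t; exact: hb.
  - by near: t; exact: hd.
  - by near: t; exact: nbhs_right_lt.
case/filter_ex => t [tp tt0 hbt hdt tb].
have tt : 0 < t < t0 by rewrite tp tt0.
have [mg g01] := hf t tt.
have [E01r E01i] := hrep t tt 0 1.
have [E11 _] := hrep t tt 1 1.
have hA : forall x, F n x <-> 0 < y x <= eta ^+ 2 by move=> x; rewrite /F /= in_itv.
have eps0 : 0 < t * K by rewrite mulr_gt0.
have B1 := int_bound _ _ _ mu _ _ _ _ _ _ eps0 eta0 (mF n) hA mg mr my g01 hyr.
have B2 := int_bound _ _ _ mu _ _ _ _ _ _ eps0 eta0 (mF n) hA mg ms my g01 hys.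
rewrite -E01r -E11 muF abse_EFin -!EFinM -EFinD lee_fin in B1.
rewrite -E01i -E11 muF abse_EFin -!EFinM -EFinD lee_fin in B2.
have hY := @le_realC _ _ _ hdt.
have hN := @norm_ge _ _ _ (ltW (mulr_gt0 hl tp)) hbt.
move: B1 B2 hY hN.
set C := 1 / (2 * (t * K)) + 1 / eta.
set Y := complex.Re (sigma t 1 1).
set Rr := `|complex.Re (sigma t 0 1)|.
set Ri := `|complex.Im (sigma t 0 1)|.
move=> B1 B2 hY hN.
have C0 : 0 <= C.
  rewrite /C; apply: addr_ge0; apply: ltW; apply: divr_gt0 => //.
  by rewrite mulr_gt0.
have f1 : t * K * m < t * l / 4.
  have h1 : K * m < K * e by rewrite ltr_pM2l.
  have h2 : K * e = l / 4.
    rewrite /e; field; exact: lt0r_neq0.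
  rewrite -mulrA -mulrA; rewrite ltr_pM2l //; lra.
have f2 : C * Y <= C * (a * t ^+ 2).
  apply: ler_wpM2l => //; apply: (le_trans hY); apply: ler_wpM2r => //; exact: sqr_ge0.
have f3 : 2 * (C * (a * t ^+ 2)) = t * l / 4 + 2 * a * t ^+ 2 / eta.
  rewrite /C /K; field.
  by rewrite !lt0r_neq0.
have f4 : 2 * a * t ^+ 2 / eta < t * l / 4.
  rewrite ltr_pdivrMr //.
  have h1 : t * (8 * a) < eta * l by rewrite -ltr_pdivlMr ?mulr_gt0 //; lra.
  have h2 : t * (t * (8 * a)) < t * (eta * l) by rewrite ltr_pM2l.
  rewrite expr2; lra.
have : l * t <= t * K * m + 2 * (C * Y) by lra.
have : l * t = t * l by rewrite mulrC.
have := mulr_gt0 tp hl.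
lra.
Unshelve. all: by end_near.
Qed.
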